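(* Let $G=(V_G,E_G)$ be a finite directed acyclic graph. There is a one-to-one correspondence between Bayesian networks based on $G$ and CDU functors $\mathsf{Free}(G)\to\mathsf{Stoch}$. Explicitly, a Bayesian network $(\tau,\{P(A\mid \mathrm{Pa}(A))\}_{A\in V_G})$ corresponds to the CDU functor $\mathcal F$ with $\mathcal F(A)=\tau(A)$ on generating objects and sending the generator $a\colon B_1\otimes\cdots\otimes B_k\to A$ to the stochastic matrix with entries $\mathcal F(a)^{j}_{i_1\ldots i_k}=P(A=j\mid \mathrm{Pa}(A)=(i_1,\ldots,i_k))$; conversely a CDU functor $\mathcal F$ determines the Bayesian network with $\tau(A)=\mathcal F(A)$ and $P(A=j\mid\mathrm{Pa}(A)=(i_1,\ldots,i_k))=\mathcal F(a)^j_{i_1\ldots i_k}$, and these two assignments are mutually inverse.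
   Context: $\mathsf{Stoch}$ is the symmetric monoidal category whose objects are finite (nonempty) sets and whose morphisms $f\colon A\to B$ are $|B|\times|A|$ matrices of nonnegative reals with every column summing to $1$ (entries written $f_i^j$, $i\in A$, $j\in B$); composition is matrix multiplication, the monoidal product is cartesian product on objects and Kronecker product on matrices, $I=\{*\}$, and the symmetry is the swap matrix. A CDU category is a symmetric monoidal category in which every object $A$ carries a copy map $A\to A\otimes A$, a discard map $A\to I$ and a uniform state $I\to A$, such that copy is coassociative, cocommutative and counital with respect to discard, and discard composed with the uniform state is the identity on $I$; the structure on $I$ is trivial and that on $A\otimes B$ is built componentwise from those on $A$ and $B$. In $\mathsf{Stoch}$ these are: copy $(\Delta)_i^{jk}=\delta_i^j\delta_i^k$, discard $(\epsilon)_i=1$, uniform $(u)^i=1/|A|$. A CDU functor is a symmetric monoidal functor between CDU categories preserving copy maps, discard maps and uniform states. For a set $X$ of generating objects and a set $\Sigma$ of typed generating morphisms $f\colon u\to w$ ($u,w\in X^\star$), the free CDU category $\mathsf{FreeCDU}(X,\Sigma)$ has objects the words $X^\star$ and morphisms the string diagrams built from $\Sigma$ and copy/discard/uniform maps on each $x\in X$, modulo the CDU equations above. For a dag $G$, $\mathsf{Free}(G):=\mathsf{FreeCDU}(V_G,\Sigma_G)$ where $\Sigma_G$ contains, for each node $A$ with parents $B_1,\ldots,B_k$ (in a fixed order), one generator $a\colon B_1\otimes\cdots\otimes B_k\to A$. A Bayesian network based on $G$ consists of an assignment of a finite set $\tau(A)$ to each node $A\in V_G$ together with, for each $A$, a conditional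 probability distribution $P(A\mid\mathrm{Pa}(A))$ of values in $\tau(A)$ given values in $\tau(B_1)\times\cdots\times\tau(B_k)$ of the parents. *)

(* Defs.v *)
From HB Require Import structures.
From mathcomp Require Import all_boot all_order all_algebra.
From mathcomp Require Import reals.
Set Implicit Arguments. Unset Strict Implicit. Unset Printing Implicit Defensive.
Import Order.TTheory GRing.Theory Num.Theory.
Local Open Scope ring_scope.

(* Stoch, strictified: an object of a word w = [x1;..;xn] of generating     *)
(* objects, under an assignment tau of finite sets to generators, is the    *)
(* nested product tau x1 * (tau x2 * ( ... * unit)).  A morphism X -> Y is  *)
(* a function f : X -> Y -> R with f i j = f_i^j (column i, row j).         *)
Section Stoch.
Variable R : realType.
Variable V : Type.
Variable tau : V -> finType.

Fixpoint prodT (s : seq V) : finType :=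
  match s with
  | [::] => Finite.clone unit _
  | x :: s' => Finite.clone (tau x * prodT s')%type _
  end.

Fixpoint psplit (u v : seq V) : prodT (u ++ v) -> prodT u * prodT v :=
  match u return prodT (u ++ v) -> prodT u * prodT v with
  | [::] => fun x => (tt, x)
  | a :: u' => fun x => let p := @psplit u' v x.2 in ((x.1, p.1), p.2)
  end.

Definition stochastic (X Y : finType) (f : X -> Y -> R) : Prop :=
  (forall i j, 0 <= f i j) /\ (forall i, \sum_(j : Y) f i j = 1).

Definition sid (X : finType) : X -> X -> R := fun i j => (i == j)%:R.

Definition scomp (X Y Z : finType) (f : X -> Y -> R) (g : Y -> Z -> R)
  : X -> Z -> R := fun i k => \sum_(j : Y) f i j * g j k.

Definition stens (u1 w1 u2 w2 : seq V)
  (f : prodT u1 -> prodT w1 -> R) (g : prodT u2 -> prodT w2 -> R)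
  : prodT (u1 ++ u2) -> prodT (w1 ++ w2) -> R :=
  fun i j => f (psplit i).1 (psplit j).1 * g (psplit i).2 (psplit j).2.

Definition sswap (u w : seq V) : prodT (u ++ w) -> prodT (w ++ u) -> R :=
  fun i j => (((psplit i).1 == (psplit j).2) && ((psplit i).2 == (psplit j).1))%:R.

Definition scopy (x : V) : prodT [:: x] -> prodT [:: x; x] -> R :=
  fun i j => ((j.1 == i.1) && (j.2.1 == i.1))%:R.

Definition sdisc (x : V) : prodT [:: x] -> prodT [::] -> R := fun _ _ => 1.

Definition sunif (x : V) : prodT [::] -> prodT [:: x] -> R :=
  fun _ _ => (#|tau x|%:R)^-1.

End Stoch.

(* Free CDU category on generating objects V and one generator              *)
(*   a : pa A -> [:: A]   for each node A (pa A = parents in a fixed order). *)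
(* Morphisms u -> w: well-typed diagram terms modulo [eqv].                  *)
Section Free.
Variable V : finType.
Variable pa : V -> seq V.

Inductive tm : Type :=
| Gen of V
| Id of seq V
| Comp of tm & tm               (* Comp f g = g o f (diagrammatic order) *)
| Tens of tm & tm
| Swap of seq V & seq V
| Copy of V
| Disc of V
| Unif of V.

Fixpoint ty (t : tm) : option (seq V * seq V) :=
  match t with
  | Gen A => Some (pa A, [:: A])
  | Id w => Some (w, w)
  | Comp f g =>
      match ty f, ty g with
      | Some (u, v), Some (v', w) => if v == v' then Some (u, w) else None
      | _, _ => None
      end
  | Tens f g =>
      match ty f, ty g with
      | Some (u1, w1), Some (u2, w2) => Some (u1 ++ u2, w1 ++ w2)
      | _, _ => None
      end
  | Swap u w => Some (u ++ w, w ++ u)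
  | Copy x => Some ([:: x], [:: x; x])
  | Disc x => Some ([:: x], [::])
  | Unif x => Some ([::], [:: x])
  end.

Definition Hom (u w : seq V) := {t : tm | ty t == Some (u, w)}.

(* The congruence generated by the axioms of symmetric monoidal categories *)
(* and the CDU equations (for generating objects; the structure on words is *)
(* the componentwise one, hence derived).                                   *)
Inductive eqv : tm -> tm -> Prop :=
| eqv_refl t : eqv t t
| eqv_sym t t' : eqv t t' -> eqv t' t
| eqv_trans t1 t2 t3 : eqv t1 t2 -> eqv t2 t3 -> eqv t1 t3
| eqv_comp f f' g g' : eqv f f' -> eqv g g' -> eqv (Comp f g) (Comp f' g')
| eqv_tens f f' g g' : eqv f f' -> eqv g g' -> eqv (Tens f g) (Tens f' g')
| ax_idl f u w : ty f = Some (u, w) -> eqv (Comp (Id u) f) f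
| ax_idr f u w : ty f = Some (u, w) -> eqv (Comp f (Id w)) f
| ax_assoc f g h : eqv (Comp (Comp f g) h) (Comp f (Comp g h))
| ax_tassoc f g h : eqv (Tens (Tens f g) h) (Tens f (Tens g h))
| ax_tunitl f : eqv (Tens (Id [::]) f) f
| ax_tunitr f : eqv (Tens f (Id [::])) f
| ax_tid u w : eqv (Tens (Id u) (Id w)) (Id (u ++ w))
| ax_interchange f f' g g' u1 v1 w1 u2 v2 w2 :
    ty f = Some (u1, v1) -> ty f' = Some (v1, w1) ->
    ty g = Some (u2, v2) -> ty g' = Some (v2, w2) ->
    eqv (Comp (Tens f g) (Tens f' g')) (Tens (Comp f f') (Comp g g'))
| ax_swap_inv u w : eqv (Comp (Swap u w) (Swap w u)) (Id (u ++ w))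
| ax_swap_nat f g u1 w1 u2 w2 :
    ty f = Some (u1, w1) -> ty g = Some (u2, w2) ->
    eqv (Comp (Tens f g) (Swap w1 w2)) (Comp (Swap u1 u2) (Tens g f))
| ax_hexagon u v w :
    eqv (Swap u (v ++ w))
        (Comp (Tens (Swap u v) (Id w)) (Tens (Id v) (Swap u w)))
| ax_swap_unit u : eqv (Swap u [::]) (Id u)
| ax_coassoc x :
    eqv (Comp (Copy x) (Tens (Copy x) (Id [:: x])))
        (Comp (Copy x) (Tens (Id [:: x]) (Copy x)))
| ax_cocomm x : eqv (Comp (Copy x) (Swap [:: x] [:: x])) (Copy x)
| ax_counitl x : eqv (Comp (Copy x) (Tens (Disc x) (Id [:: x]))) (Id [:: x])
| ax_counitr x : eqv (Comp (Copy x) (Tens (Id [:: x]) (Disc x))) (Id [:: x])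
| ax_unif x : eqv (Comp (Unif x) (Disc x)) (Id [::]).

Lemma ty_comp (f g : tm) (u v w : seq V) :
  ty f == Some (u, v) -> ty g == Some (v, w) -> ty (Comp f g) == Some (u, w).
Proof. by move=> /eqP hf /eqP hg; rewrite /= hf hg eqxx. Qed.

Lemma ty_tens (f g : tm) (u1 w1 u2 w2 : seq V) :
  ty f == Some (u1, w1) -> ty g == Some (u2, w2) ->
  ty (Tens f g) == Some (u1 ++ u2, w1 ++ w2).
Proof. by move=> /eqP hf /eqP hg; rewrite /= hf hg. Qed.

Definition hgen (A : V) : Hom (pa A) [:: A] := exist _ (Gen A) (eqxx _).
Definition hid (w : seq V) : Hom w w := exist _ (Id w) (eqxx _).
Definition hcomp u v w (f : Hom u v) (g : Hom v w) : Hom u w :=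
  exist _ (Comp (sval f) (sval g)) (ty_comp (svalP f) (svalP g)).
Definition htens u1 w1 u2 w2 (f : Hom u1 w1) (g : Hom u2 w2)
  : Hom (u1 ++ u2) (w1 ++ w2) :=
  exist _ (Tens (sval f) (sval g)) (ty_tens (svalP f) (svalP g)).
Definition hswap (u w : seq V) : Hom (u ++ w) (w ++ u) :=
  exist _ (Swap u w) (eqxx _).
Definition hcopy (x : V) : Hom [:: x] [:: x; x] := exist _ (Copy x) (eqxx _).
Definition hdisc (x : V) : Hom [:: x] [::] := exist _ (Disc x) (eqxx _).
Definition hunif (x : V) : Hom [::] [:: x] := exist _ (Unif x) (eqxx _).

End Free.

Section Correspondence.
Variable R : realType.
Variable V : finType.
Variable pa : V -> seq V.

Record CDUFunctor := {
  F_ob : V -> finType;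
  F_ne : forall x, (0 < #|F_ob x|)%N;   (* objects of Stoch are nonempty *)
  F_mor : forall u w, Hom pa u w -> prodT F_ob u -> prodT F_ob w -> R;
  F_stoch : forall u w (f : Hom pa u w), stochastic (F_mor f);
  F_resp : forall u w (f g : Hom pa u w),
      eqv pa (sval f) (sval g) -> F_mor f = F_mor g;
  F_id : forall w, F_mor (hid pa w) = @sid R _;
  F_comp : forall u v w (f : Hom pa u v) (g : Hom pa v w),
      F_mor (hcomp f g) = scomp (F_mor f) (F_mor g);
  F_tens : forall u1 w1 u2 w2 (f : Hom pa u1 w1) (g : Hom pa u2 w2),
      F_mor (htens f g) = stens (F_mor f) (F_mor g);
  F_swap : forall u w, F_mor (hswap pa u w) = @sswap R _ F_ob u w;
  F_copy : forall x, F_mor (hcopy pa x) = @scopy R _ F_ob x;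
  F_disc : forall x, F_mor (hdisc pa x) = @sdisc R _ F_ob x;
  F_unif : forall x, F_mor (hunif pa x) = @sunif R _ F_ob x
}.

(* bn_cpt A i j = P(A = j | Pa(A) = i), i a tuple of values of the parents *)
Record BN := {
  bn_ty : V -> finType;
  bn_cpt : forall A, prodT bn_ty (pa A) -> bn_ty A -> R;
  bn_ge0 : forall A i j, 0 <= @bn_cpt A i j;
  bn_sum1 : forall A i, \sum_(j : bn_ty A) @bn_cpt A i j = 1
}.

Lemma sum_pair_unit (T : finType) (h : (T * unit)%type -> R) :
  \sum_(p : Finite.clone (T * unit)%type _) h p = \sum_(j : T) h (j, tt).
Proof.
change (\sum_(p : (T * unit)%type) h p = \sum_(j : T) h (j, tt)).
rewrite (eq_bigr (fun p => h (p.1, p.2))); last by case.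
rewrite -(pair_bigA _ (fun i (j:unit) => h (i, j))) /=.
by apply: eq_bigr => j _; rewrite (big_pred1 tt) //; case.
Qed.

Definition restrict (F : CDUFunctor) : BN.
refine (@Build_BN (F_ob F)
          (fun A i j => @F_mor F _ _ (hgen pa A) i (j, tt)) _ _).
- by move=> A i j; case: (@F_stoch F _ _ (hgen pa A)) => H _; apply: H.
- move=> A i; case: (@F_stoch F _ _ (hgen pa A)) => _ H.
  by rewrite -(H i) sum_pair_unit.
Defined.

End Correspondence.

(* Main.v *)
Require Import Defs.
From HB Require Import structures.
From mathcomp Require Import all_boot all_order all_algebra.
From mathcomp Require Import reals.
From Stdlib Require Import FunctionalExtensionality ProofIrrelevance Eqdep.
Set Implicit Arguments. Unset Strict Implicit. Unset Printing Implicit Defensive.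
Import Order.TTheory GRing.Theory Num.Theory.
Local Open Scope ring_scope.

Section Enc.
Variable R : realType.
Variable V : finType.
Variable tau : V -> finType.

Definition Val := seq {x : V & tau x}.

Fixpoint enc (u : seq V) : prodT tau u -> Val :=
  match u return prodT tau u -> Val with
  | [::] => fun _ => [::]
  | x :: u' => fun p => Tagged tau p.1 :: enc p.2
  end.

Lemma Tagged_inj (x : V) (a b : tau x) : (Tagged tau a == Tagged tau b) = (a == b).
Proof. by rewrite eq_Tagged. Qed.

Lemma enc_tag u (i : prodT tau u) : map tag (enc i) = u.
Proof. by elim: u i => [|x u IH] //= [a i]; rewrite IH. Qed.

Lemma size_enc u (i : prodT tau u) : size (enc i) = size u.
Proof. by have := congr1 size (enc_tag i); rewrite size_map. Qed.

Lemma enc_inj u : injective (@enc u).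
Proof.
elim: u => [|x u IH] /=; first by move=> [] [].
move=> [a i] [b j] [] /eqP; rewrite Tagged_inj => /eqP -> /IH ->.
done.
Qed.

Lemma enc_eq u (i j : prodT tau u) : (enc i == enc j) = (i == j).
Proof. by apply/eqP/eqP => [/enc_inj|->]. Qed.

Lemma enc_surj (m : seq V) (c : Val) : map tag c = m -> exists p : prodT tau m, enc p = c.
Proof.
elim: m c => [|x m IH] c.
  by case: c => // _; exists tt.
case: c => [|[y v] c] //= [e /IH [p <-]]; subst y; by exists (v, p).
Qed.

Lemma tag_split (a b : seq V) (s : Val) : map tag s = a ++ b ->
  exists s1 s2, [/\ s = s1 ++ s2, map tag s1 = a & map tag s2 = b].
Proof.
move=> h; exists (take (size a) s), (drop (size a) s); split.
- by rewrite cat_take_drop.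
- by rewrite map_take h take_size_cat.
- by rewrite map_drop h drop_size_cat.
Qed.

Lemma sum_nil (F : prodT tau [::] -> R) : \sum_(j : prodT tau [::]) F j = F tt.
Proof.
change (\sum_(j : unit) F j = F tt).
by rewrite (big_pred1 tt) //; case.
Qed.

Lemma sum_cons x m (F : prodT tau (x :: m) -> R) :
  \sum_(j : prodT tau (x :: m)) F j = \sum_(v : tau x) \sum_(j : prodT tau m) F (v, j).
Proof.
change (\sum_(j : (tau x * prodT tau m)%type) F j = \sum_(v : tau x) \sum_(j : prodT tau m) F (v, j)).
rewrite (eq_bigr (fun p => F (p.1, p.2))); last by case.
by rewrite -(pair_bigA _ (fun v j => F (v, j))).
Qed.

Lemma sum_cat a b (F : Val -> R) :
  \sum_(j : prodT tau (a ++ b)) F (enc j) =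
  \sum_(x : prodT tau a) \sum_(y : prodT tau b) F (enc x ++ enc y).
Proof.
elim: a F => [|x a IH] F /=.
  by rewrite sum_nil.
rewrite !sum_cons; apply: eq_bigr => v _ /=.
by rewrite (IH (fun e => F (Tagged tau v :: e))).
Qed.

Lemma sum_collapse m (c : Val) (G : Val -> R) : map tag c = m ->
  \sum_(j : prodT tau m) (enc j == c)%:R * G (enc j) = G c.
Proof.
move=> /enc_surj [p <-].
rewrite (bigD1 p) //= eqxx mul1r big1 ?addr0 // => j /negbTE hj.
by rewrite enc_eq hj mul0r.
Qed.

Lemma sum_collapse1 m (c : Val) : map tag c = m ->
  \sum_(j : prodT tau m) (enc j == c)%:R = 1 :> R.
Proof.
move=> h; rewrite -[RHS](sum_collapse (fun _ => 1) h).
by apply: eq_bigr => j _; rewrite mulr1.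
Qed.

Lemma takeS (s1 s2 : Val) : take (size s1) (s1 ++ s2) = s1.
Proof. exact: take_size_cat. Qed.
Lemma dropS (s1 s2 : Val) : drop (size s1) (s1 ++ s2) = s2.
Proof. exact: drop_size_cat. Qed.

Lemma eq_cat2 (p q e : Val) :
  (take (size p) e == p) && (drop (size p) e == q) = (e == p ++ q).
Proof.
apply/andP/eqP => [[/eqP h1 /eqP h2]|->]; last by rewrite takeS dropS.
by rewrite -(cat_take_drop (size p) e) h1 h2.
Qed.

Lemma eqseq_cat2 (s1 s2 s3 s4 : Val) : size s1 = size s2 ->
  (s1 ++ s3 == s2 ++ s4) = (s1 == s2) && (s3 == s4).
Proof. exact: eqseq_cat. Qed.

End Enc.



Section Interp.
Variable R : realType.
Variable V : finType.
Variable pa : V -> seq V.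
Variable tau : V -> finType.
Variable cpt : forall A, prodT tau (pa A) -> tau A -> R.
Hypothesis cpt_ge0 : forall A (i : prodT tau (pa A)) (j : tau A), 0 <= cpt i j.
Hypothesis cpt_sum1 : forall A (i : prodT tau (pa A)), \sum_(j : tau A) cpt i j = 1.
Hypothesis ne : forall x, (0 < #|tau x|)%N.

Definition dom (t : tm V) : seq V := if ty pa t is Some (u, _) then u else [::].
Definition cod (t : tm V) : seq V := if ty pa t is Some (_, w) then w else [::].

Fixpoint interp (t : tm V) (s s' : Val tau) : R :=
  match t with
  | Gen A => \sum_(i : prodT tau (pa A)) (enc i == s)%:R *
        \sum_(j : tau A) ([:: Tagged tau j] == s')%:R * cpt i j
  | Id _ => (s' == s)%:R
  | Comp f g => \sum_(j : prodT tau (cod f)) interp f s (enc j) * interp g (enc j) s'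
  | Tens f g => interp f (take (size (dom f)) s) (take (size (cod f)) s') *
                interp g (drop (size (dom f)) s) (drop (size (cod f)) s')
  | Swap u _ => (s' == drop (size u) s ++ take (size u) s)%:R
  | Copy _ => (s' == s ++ s)%:R
  | Disc _ => 1
  | Unif x => (#|tau x|%:R)^-1
  end.

Lemma domE t u w : ty pa t = Some (u, w) -> dom t = u.
Proof. by rewrite /dom => ->. Qed.
Lemma codE t u w : ty pa t = Some (u, w) -> cod t = w.
Proof. by rewrite /cod => ->. Qed.

Lemma comp_eval f g u v s s' : ty pa f = Some (u, v) ->
  interp (Comp f g) s s' = \sum_(j : prodT tau v) interp f s (enc j) * interp g (enc j) s'.
Proof. by move=> h /=; rewrite (codE h). Qed.

Lemma tens_eval f g a b s s' : ty pa f = Some (a, b) ->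
  interp (Tens f g) s s' = interp f (take (size a) s) (take (size b) s') *
                interp g (drop (size a) s) (drop (size b) s').
Proof. by move=> h /=; rewrite (codE h) (domE h). Qed.

Lemma sum_delta (T : finType) (i : T) (G : T -> R) :
  \sum_(k : T) (k == i)%:R * G k = G i.
Proof.
rewrite (bigD1 i) //= eqxx mul1r big1 ?addr0 // => k /negbTE ->.
by rewrite mul0r.
Qed.

Lemma gen_eval A (i : prodT tau (pa A)) (j : tau A) :
  interp (Gen A) (enc i) [:: Tagged tau j] = cpt i j.
Proof.
rewrite /= (eq_bigr (fun k => (k == i)%:R *
   \sum_(j0 : tau A) (j0 == j)%:R * cpt k j0)).
  by rewrite sum_delta sum_delta.
move=> k _; rewrite enc_eq; congr (_ * _); apply: eq_bigr => j0 _.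
by rewrite eqseq_cons Tagged_inj andbT.
Qed.

Lemma interp_ge0 t s s' : 0 <= interp t s s'.
Proof.
elim: t s s' => /=.
- move=> A s s'; apply: sumr_ge0 => i _; apply: mulr_ge0 => //.
  by apply: sumr_ge0 => j _; apply: mulr_ge0.
- by [].
- by move=> f IHf g IHg s s'; apply: sumr_ge0 => j _; apply: mulr_ge0.
- by move=> f IHf g IHg s s'; apply: mulr_ge0.
- by [].
- by [].
- by [].
- by move=> x _ _; rewrite invr_ge0.
Qed.

Lemma ty_CompP f g u w : ty pa (Comp f g) = Some (u, w) ->
  exists v, ty pa f = Some (u, v) /\ ty pa g = Some (v, w).
Proof.
rewrite /=; case: (ty pa f) => [[a b]|] //; case: (ty pa g) => [[c d]|] //.
by case: eqP => // -> [<- <-]; exists c.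
Qed.

Lemma ty_TensP f g u w : ty pa (Tens f g) = Some (u, w) ->
  exists u1 w1 u2 w2, [/\ ty pa f = Some (u1, w1), ty pa g = Some (u2, w2),
     u = u1 ++ u2 & w = w1 ++ w2].
Proof.
rewrite /=; case: (ty pa f) => [[a b]|] //; case: (ty pa g) => [[c d]|] //.
by case=> <- <-; exists a, b, c, d.
Qed.


Lemma sum_unif x : \sum_(j : prodT tau [:: x]) (#|tau x|%:R)^-1 = 1 :> R.
Proof.
rewrite sum_cons (eq_bigr (fun _ => (#|tau x|%:R)^-1)); last by move=> v _; rewrite sum_nil.
rewrite sumr_const -[_ *+ #|_|]mulr_natr.
have -> : #|[pred _ : tau x | true]| = #|tau x| by apply: eq_card.
rewrite mulVf // pnatr_eq0 -lt0n; exact: ne.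
Qed.

Lemma interp_sum1 t u w : ty pa t = Some (u, w) -> forall s, map tag s = u ->
  \sum_(j : prodT tau w) interp t s (enc j) = 1.
Proof.
elim: t u w => /=.
- move=> A u w [<- <-] s /enc_surj [i <-].
  rewrite sum_cons (eq_bigr (fun v => cpt i v)) //.
  by move=> v _; rewrite sum_nil; exact: gen_eval.
- move=> w0 u w [<- <-] s hs; exact: sum_collapse1.
- move=> f IHf g IHg u w /ty_CompP [v [hf hg]] s hs.
  rewrite (codE hf).
  rewrite exchange_big /= (eq_bigr (fun j => interp f s (enc j))); first exact: IHf hs.
  by move=> j _; rewrite -mulr_sumr (IHg _ _ hg) ?mulr1 // enc_tag.
- move=> f IHf g IHg u w /ty_TensP [u1 [w1 [u2 [w2 [hf hg -> ->]]]]] s.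
  move=> /tag_split [s1 [s2 [-> h1 h2]]].
  rewrite (domE hf) (codE hf).
  rewrite (sum_cat w1 w2 (fun e => interp f (take (size u1) (s1 ++ s2)) (take (size w1) e) *
     interp g (drop (size u1) (s1 ++ s2)) (drop (size w1) e))).
  rewrite (eq_bigr (fun x => interp f s1 (enc x) * \sum_(y : prodT tau w2) interp g s2 (enc y))).
    by rewrite -mulr_suml (IHf _ _ hf) // (IHg _ _ hg) // mulr1.
  move=> x _; rewrite mulr_sumr; apply: eq_bigr => y _.
  rewrite -h1 size_map takeS dropS -(size_enc x) takeS dropS.
  done.
- move=> a b u w [<- <-] s /tag_split [s1 [s2 [-> h1 h2]]].
  apply: sum_collapse1; rewrite -h1 size_map takeS dropS map_cat h1 h2 //.
- move=> x u w [<- <-] s hs; apply: sum_collapse1; by rewrite map_cat hs.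
- move=> x u w [<- <-] s hs; by rewrite sum_nil.
- move=> x u w [<- <-] s hs; exact: sum_unif.
Qed.

End Interp.



Section Eqv.
Variable V : finType.
Variable pa : V -> seq V.

Lemma eqv_ty t t' : eqv pa t t' -> ty pa t = ty pa t'.
Proof.
elim=> {t t'} /=.
- by [].
- by move=> t t' _ ->.
- by move=> t1 t2 t3 _ -> _ ->.
- by move=> f f' g g' _ -> _ ->.
- by move=> f f' g g' _ -> _ ->.
- by move=> f u w ->; rewrite eqxx.
- by move=> f u w ->; rewrite eqxx.
- move=> f g h; case: (ty pa f) => [[a b]|] //; case: (ty pa g) => [[c d]|] //;
  case: (ty pa h) => [[e k]|] //=.
  + case: (eqVneq b c) => [?|nbc]; case: (eqVneq d e) => [?|nde]; subst => /=;
    by rewrite ?eqxx ?(negbTE nbc) ?(negbTE nde).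
  + by case: (_ == _).
- move=> f g h; case: (ty pa f) => [[a b]|] //; case: (ty pa g) => [[c d]|] //;
  case: (ty pa h) => [[e k]|] //=; by rewrite !catA.
- by move=> f; case: (ty pa f) => [[a b]|].
- by move=> f; case: (ty pa f) => [[a b]|] //=; rewrite !cats0.
- by [].
- by move=> f f' g g' u1 v1 w1 u2 v2 w2 -> -> -> ->; rewrite !eqxx.
- by move=> u w; rewrite eqxx.
- by move=> f g u1 w1 u2 w2 -> ->; rewrite !eqxx.
- by move=> u v w; rewrite !catA eqxx.
- by move=> u; rewrite cats0.
- by move=> x /=; rewrite ?eqxx.
- by move=> x /=; rewrite ?eqxx.
- by move=> x /=; rewrite ?eqxx.
- by move=> x /=; rewrite ?eqxx.
- by move=> x /=; rewrite ?eqxx.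
Qed.

End Eqv.



Section EqvInterp.
Variable R : realType.
Variable V : finType.
Variable pa : V -> seq V.
Variable tau : V -> finType.
Variable cpt : forall A, prodT tau (pa A) -> tau A -> R.
Hypothesis ne : forall x, (0 < #|tau x|)%N.

Local Notation I := (interp cpt).

Lemma natr_and (b1 b2 : bool) : (b1%:R * b2%:R : R) = (b1 && b2)%:R.
Proof. by rewrite -natrM mulnb. Qed.

Lemma tag1 (s : Val tau) x : map tag s = [:: x] -> exists a, s = [:: a].
Proof. by case: s => [|a [|]] //; exists a. Qed.

Lemma swap_ind a b (e s' : Val tau) : map tag e = a ++ b -> map tag s' = b ++ a ->
  (s' == drop (size a) e ++ take (size a) e) = (e == drop (size b) s' ++ take (size b) s').
Proof.
move=> /tag_split [e1 [e2 [-> h1 h2]]] /tag_split [t1 [t2 [-> h3 h4]]].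
subst a b.
have s1 : size t1 = size e2 by rewrite -(size_map tag) h3 size_map.
have s2 : size e1 = size t2 by rewrite -(size_map tag) -h4 size_map.
rewrite !size_map takeS dropS -s1 takeS dropS.
rewrite eqseq_cat2 ?s1 // eqseq_cat2 ?s2 // andbC.
by rewrite (eq_sym t1) (eq_sym t2).
Qed.

Lemma eqv_interp t t' : eqv pa t t' -> forall u w s s', ty pa t = Some (u, w) ->
  map tag s = u -> map tag s' = w -> I t s s' = I t' s s'.
Proof.
elim=> {t t'}.
- by [].
- move=> t t' H IH u w s s' ht hs hs'; symmetry; apply: IH hs hs'.
  by rewrite (eqv_ty H).
- move=> t1 t2 t3 H12 IH12 H23 IH23 u w s s' ht hs hs'.
  rewrite (IH12 _ _ _ _ ht hs hs'); apply: IH23 hs hs'.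
  by rewrite -(eqv_ty H12).
- move=> f f' g g' Hf IHf Hg IHg u w s s' /ty_CompP [v [hf hg]] hs hs'.
  have hf' : ty pa f' = Some (u, v) by rewrite -(eqv_ty Hf).
  rewrite (comp_eval cpt _ _ _ hf) (comp_eval cpt _ _ _ hf'); apply: eq_bigr => j _.
  by rewrite (IHf _ _ _ _ hf hs (enc_tag j)) (IHg _ _ _ _ hg (enc_tag j) hs').
- move=> f f' g g' Hf IHf Hg IHg u w s s' /ty_TensP [u1 [w1 [u2 [w2 [hf hg -> ->]]]]].
  move=> /tag_split [s1 [s2 [-> h1 h2]]] /tag_split [t1 [t2 [-> h3 h4]]].
  have hf' : ty pa f' = Some (u1, w1) by rewrite -(eqv_ty Hf).
  subst u1 w1.
  rewrite (tens_eval cpt _ _ _ hf) (tens_eval cpt _ _ _ hf') !size_map !takeS !dropS.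
  by rewrite (IHf _ _ _ _ hf erefl erefl) (IHg _ _ _ _ hg h2 h4).
-
  move=> f u w hf u' w' s s' ht.
  have e : ty pa (Comp (Id u) f) = Some (u, w) by rewrite /= hf eqxx.
  rewrite e in ht; case: ht => <- <- hs hs'.
  rewrite (@comp_eval _ _ _ _ cpt _ _ (u) (u)) //=.
  exact: (sum_collapse (fun e => I f e s') hs).
-
  move=> f u w hf u' w' s s' ht.
  have e : ty pa (Comp f (Id w)) = Some (u, w) by rewrite /= hf eqxx.
  rewrite e in ht; case: ht => <- <- hs hs'.
  rewrite (comp_eval cpt _ _ _ hf) /=.
  rewrite (eq_bigr (fun j => (enc j == s')%:R * (fun e => I f s e) (enc j))).
    exact: sum_collapse.
  by move=> j _; rewrite mulrC eq_sym.
-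
  move=> f g h u w s s' /ty_CompP [v [/ty_CompP [v0 [hf hg]] hh]] hs hs'.
  have hgh : ty pa (Comp g h) = Some (v0, w) by rewrite /= hg hh eqxx.
  have hfg : ty pa (Comp f g) = Some (u, v) by rewrite /= hf hg eqxx.
  rewrite (comp_eval cpt _ _ _ hfg) (comp_eval cpt _ _ _ hf).
  rewrite (eq_bigr (fun k => \sum_(j : prodT tau v0) I f s (enc j) * I g (enc j) (enc k) * I h (enc k) s')); last first.
    by move=> k _; rewrite (comp_eval cpt _ _ _ hf) mulr_suml.
  rewrite exchange_big; apply: eq_bigr => j _.
  rewrite (comp_eval cpt _ _ _ hg) mulr_sumr; apply: eq_bigr => k _.
  by rewrite mulrA.
-
  move=> f g h u w s s' /ty_TensP [u12 [w12 [u3 [w3 [/ty_TensP [u1 [w1 [u2 [w2 [hf hg e1 e2]]]] hh -> ->]]]]]].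
  subst u12 w12.
  move=> /tag_split [s12 [s3 [-> h12 h3]]] /tag_split [t12 [t3 [-> k12 k3]]].
  move: h12 k12 => /tag_split [s1 [s2 [-> h1 h2]]] /tag_split [t1 [t2 [-> k1 k2]]].
  subst.
  have hfg : ty pa (Tens f g) = Some (map tag s1 ++ map tag s2, map tag t1 ++ map tag t2).
    by rewrite /= hf hg.
  rewrite (tens_eval cpt _ _ _ hfg) -!map_cat !size_map !takeS !dropS.
  rewrite (tens_eval cpt _ _ _ hf) !size_map !takeS !dropS.
  rewrite -!catA (tens_eval cpt _ _ _ hf) !size_map !takeS !dropS.
  have hgh : ty pa (Tens g h) = Some (map tag s2 ++ map tag s3, map tag t2 ++ map tag t3).
    by rewrite /= hg hh.
  by rewrite (tens_eval cpt _ _ _ hg) !size_map !takeS !dropS mulrA.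
-
  move=> f u w s s' /ty_TensP [u1 [w1 [u2 [w2 [[<- <-] hf -> ->]]]]] hs hs' /=.
  by rewrite take0 drop0 take0 drop0 eqxx mul1r.
-
  move=> f u w s s' /ty_TensP [u1 [w1 [u2 [w2 [hf [<- <-] -> ->]]]]] hs hs'.
  rewrite (tens_eval cpt _ _ _ hf) /=.
  have ss : size s = size u1 by rewrite -(size_map tag) hs cats0.
  have ss' : size s' = size w1 by rewrite -(size_map tag) hs' cats0.
  by rewrite !take_oversize ?drop_oversize ?ss ?ss' // eqxx mulr1.
-
  move=> u w u' w' s s' [<- <-] /tag_split [s1 [s2 [-> h1 h2]]] hs'.
  rewrite (@tens_eval _ _ _ _ cpt _ _ u u) //= natr_and.
  by subst u; rewrite size_map takeS dropS eq_cat2.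
-
  move=> f f' g g' u1 v1 w1 u2 v2 w2 hf hf' hg hg' u w s s' ht.
  have e : ty pa (Comp (Tens f g) (Tens f' g')) = Some (u1 ++ u2, w1 ++ w2).
    by rewrite /= hf hf' hg hg' eqxx.
  rewrite e in ht; case: ht => <- <-.
  move=> /tag_split [s1 [s2 [-> h1 h2]]] /tag_split [t1 [t2 [-> k1 k2]]].
  subst u1 u2 w1 w2.
  have htg : ty pa (Tens f g) = Some (map tag s1 ++ map tag s2, v1 ++ v2) by rewrite /= hf hg.
  have hff : ty pa (Comp f f') = Some (map tag s1, map tag t1) by rewrite /= hf hf' eqxx.
  rewrite (comp_eval cpt _ _ _ htg).
  rewrite (sum_cat v1 v2 (fun e => I (Tens f g) (s1 ++ s2) e * I (Tens f' g') e (t1 ++ t2))).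
  rewrite (tens_eval cpt _ _ _ hff) !size_map !takeS !dropS.
  rewrite (comp_eval cpt _ _ _ hf) (comp_eval cpt _ _ _ hg) mulr_suml; apply: eq_bigr => x _.
  rewrite mulr_sumr; apply: eq_bigr => y _.
  rewrite (tens_eval cpt _ _ _ hf) (tens_eval cpt _ _ _ hf') !size_map !takeS !dropS.
  by rewrite -(size_enc x) !takeS !dropS mulrACA.
-
  move=> u w u' w' s s' ht.
  have e : ty pa (Comp (Swap u w) (Swap w u)) = Some (u ++ w, u ++ w) by rewrite /= eqxx.
  rewrite e in ht; case: ht => <- <- hs hs'.
  rewrite (@comp_eval _ _ _ _ cpt _ _ (u ++ w) (w ++ u)) //.
  have hc : map tag (drop (size u) s ++ take (size u) s) = w ++ u.
    move: hs => /tag_split [s1 [s2 [-> h1 h2]]]; subst.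
    by rewrite size_map takeS dropS map_cat.
  rewrite (sum_collapse (fun e => I (Swap w u) e s') hc) /=.
  move: hs hs' hc => /tag_split [s1 [s2 [-> h1 h2]]] hs' hc; subst.
  by rewrite !size_map takeS dropS takeS dropS.
-
  move=> f g u1 w1 u2 w2 hf hg u w s s' ht.
  have e : ty pa (Comp (Tens f g) (Swap w1 w2)) = Some (u1 ++ u2, w2 ++ w1).
    by rewrite /= hf hg eqxx.
  rewrite e in ht; case: ht => <- <- hs hs'.
  have htg : ty pa (Tens f g) = Some (u1 ++ u2, w1 ++ w2) by rewrite /= hf hg.
  rewrite (comp_eval cpt _ _ _ htg) (@comp_eval _ _ _ _ cpt _ _ (u1 ++ u2) (u2 ++ u1)) //.
  rewrite (eq_bigr (fun j => (enc j == drop (size w2) s' ++ take (size w2) s')%:R *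
                            (fun e => I (Tens f g) s e) (enc j))); last first.
    by move=> j _ /=; rewrite mulrC (swap_ind (enc_tag j) hs').
  have hc : map tag (drop (size w2) s' ++ take (size w2) s') = w1 ++ w2.
    move: hs' => /tag_split [t1 [t2 [-> k1 k2]]]; subst.
    by rewrite size_map takeS dropS map_cat.
  have hc' : map tag (drop (size u1) s ++ take (size u1) s) = u2 ++ u1.
    move: hs => /tag_split [s1 [s2 [-> h1 h2]]]; subst.
    by rewrite size_map takeS dropS map_cat.
  rewrite (sum_collapse _ hc) (sum_collapse (fun e => I (Tens g f) e s') hc').
  move: hs hs' hc hc' => /tag_split [s1 [s2 [-> h1 h2]]] /tag_split [t1 [t2 [-> k1 k2]]] _ _.
  subst.
  rewrite !size_map !takeS !dropS (tens_eval cpt _ _ _ hf) (tens_eval cpt _ _ _ hg) !size_map !takeS !dropS.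
  by rewrite mulrC.
-
  move=> u v w u' w' s s' [<- <-] /tag_split [s1 [s23 [-> h1 h23]]] hs'.
  move: h23 => /tag_split [s2 [s3 [-> h2 h3]]].
  have ht1 : ty pa (Tens (Swap u v) (Id w)) = Some ((u ++ v) ++ w, (v ++ u) ++ w) by [].
  rewrite (comp_eval cpt _ _ _ ht1).
  have hc : map tag ((s2 ++ s1) ++ s3) = (v ++ u) ++ w by rewrite !map_cat h1 h2 h3.
  rewrite (eq_bigr (fun j => (enc j == (s2 ++ s1) ++ s3)%:R *
                            (fun e => I (Tens (Id v) (Swap u w)) e s') (enc j))); last first.
    move=> j _; congr (_ * _).
    rewrite (@tens_eval _ _ _ _ cpt _ _ (u ++ v) (v ++ u)) //= natr_and.
    subst u v w.
    rewrite catA.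
    have -> : size (map tag s1 ++ map tag s2) = size (s1 ++ s2) by rewrite !size_cat !size_map.
    have -> : size (map tag s2 ++ map tag s1) = size (s2 ++ s1) by rewrite !size_cat !size_map.
    by rewrite takeS dropS size_map takeS dropS eq_cat2.
  rewrite (sum_collapse (fun e => I (Tens (Id v) (Swap u w)) e s') hc).
  rewrite (@tens_eval _ _ _ _ cpt _ _ (v) (v)) //= natr_and.
  subst u v w.
  rewrite -catA !size_map takeS dropS takeS dropS.
  by rewrite takeS dropS eq_cat2 -catA.
-
  move=> u u' w' s s' ht.
  have e : ty pa (Swap u [::]) = Some (u, u) by rewrite /= cats0.
  rewrite e in ht; case: ht => <- <- hs hs' /=.
  have ss : size s = size u by rewrite -(size_map tag) hs.
  by rewrite take_oversize ?drop_oversize ?ss.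
-
  move=> x u w s s' ht.
  have e : ty pa (Comp (Copy x) (Tens (Copy x) (Id [:: x]))) = Some ([:: x], [:: x; x; x]).
    by rewrite /= eqxx.
  rewrite e in ht; case: ht => <- <- hs hs'.
  case/tag1: (hs) => a ea; subst s.
  have hc : map tag ([:: a] ++ [:: a]) = [:: x; x] by rewrite map_cat hs.
  rewrite (@comp_eval _ _ _ _ cpt _ _ [:: x] [:: x; x]) //.
  rewrite (@comp_eval _ _ _ _ cpt _ _ [:: x] [:: x; x]) //.
  rewrite (sum_collapse (fun e => I (Tens (Copy x) (Id [:: x])) e s') hc).
  rewrite (sum_collapse (fun e => I (Tens (Id [:: x]) (Copy x)) e s') hc).
  case: s' hs' => [|b [|c [|d [|]]]] //= _.
  rewrite !eqseq_cons !eqxx !andbT.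
  by case: (b == a); case: (c == a); case: (d == a); rewrite /= ?mul0r ?mulr0 ?mul1r ?mulr1.
-
  move=> x u w s s' ht.
  have e : ty pa (Comp (Copy x) (Swap [:: x] [:: x])) = Some ([:: x], [:: x; x]).
    by rewrite /= eqxx.
  rewrite e in ht; case: ht => <- <- hs hs'.
  case/tag1: (hs) => a ea; subst s.
  have hc : map tag ([:: a] ++ [:: a]) = [:: x; x] by rewrite map_cat hs.
  rewrite (@comp_eval _ _ _ _ cpt _ _ [:: x] [:: x; x]) //.
  by rewrite (sum_collapse (fun e => I (Swap [:: x] [:: x]) e s') hc).
-
  move=> x u w s s' ht.
  have e : ty pa (Comp (Copy x) (Tens (Disc x) (Id [:: x]))) = Some ([:: x], [:: x]).
    by rewrite /= eqxx.
  rewrite e in ht; case: ht => <- <- hs hs'.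
  case/tag1: (hs) => a ea; subst s.
  have hc : map tag ([:: a] ++ [:: a]) = [:: x; x] by rewrite map_cat hs.
  rewrite (@comp_eval _ _ _ _ cpt _ _ [:: x] [:: x; x]) //.
  rewrite (sum_collapse (fun e => I (Tens (Disc x) (Id [:: x])) e s') hc).
  case/tag1: (hs') => b eb; subst s'.
  by rewrite /= mul1r.
-
  move=> x u w s s' ht.
  have e : ty pa (Comp (Copy x) (Tens (Id [:: x]) (Disc x))) = Some ([:: x], [:: x]).
    by rewrite /= eqxx.
  rewrite e in ht; case: ht => <- <- hs hs'.
  case/tag1: (hs) => a ea; subst s.
  have hc : map tag ([:: a] ++ [:: a]) = [:: x; x] by rewrite map_cat hs.
  rewrite (@comp_eval _ _ _ _ cpt _ _ [:: x] [:: x; x]) //.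
  rewrite (sum_collapse (fun e => I (Tens (Id [:: x]) (Disc x)) e s') hc).
  case/tag1: (hs') => b eb; subst s'.
  by rewrite /= mulr1.
-
  move=> x u w s s' ht.
  have e : ty pa (Comp (Unif x) (Disc x)) = Some ([::], [::]) by rewrite /= eqxx.
  rewrite e in ht; case: ht => <- <- hs hs'.
  case: s hs => // _; case: s' hs' => // _.
  rewrite (@comp_eval _ _ _ _ cpt _ _ [::] [:: x]) //.
  rewrite (eq_bigr (fun _ => (#|tau x|%:R)^-1)); last by move=> j _; rewrite mulr1.
  by rewrite (sum_unif _ ne).
Qed.

End EqvInterp.



Section Build.
Variable R : realType.
Variable V : finType.
Variable pa : V -> seq V.
Variable tau : V -> finType.
Variable cpt : forall A, prodT tau (pa A) -> tau A -> R.
Hypothesis cpt_ge0 : forall A (i : prodT tau (pa A)) (j : tau A), 0 <= cpt i j.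
Hypothesis cpt_sum1 : forall A (i : prodT tau (pa A)), \sum_(j : tau A) cpt i j = 1.
Hypothesis ne : forall x, (0 < #|tau x|)%N.

Definition mor u w (f : Defs.Hom pa u w) (i : prodT tau u) (j : prodT tau w) : R :=
  interp cpt (sval f) (enc i) (enc j).

Lemma enc_psplit u1 u2 (i : prodT tau (u1 ++ u2)) :
  enc i = enc (@psplit _ tau u1 u2 i).1 ++ enc (@psplit _ tau u1 u2 i).2.
Proof.
elim: u1 i => [|x u1 IH] i //=.
by rewrite (IH i.2).
Qed.

Lemma mor_stoch u w (f : Defs.Hom pa u w) : stochastic (@mor u w f).
Proof.
split=> [i j|i]; first exact: interp_ge0 cpt_ge0 _ _ _.
rewrite /mor; exact: (interp_sum1 cpt_sum1 ne (eqP (svalP f)) (enc_tag i)).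
Qed.

Lemma mor_resp u w (f g : Defs.Hom pa u w) : eqv pa (sval f) (sval g) -> mor f = mor g.
Proof.
move=> H; apply: functional_extensionality => i; apply: functional_extensionality => j.
exact: (eqv_interp cpt ne H (eqP (svalP f)) (enc_tag i) (enc_tag j)).
Qed.

Lemma mor_id w : mor (hid pa w) = @sid R _.
Proof.
apply: functional_extensionality => i; apply: functional_extensionality => j.
by rewrite /mor /sid /= enc_eq eq_sym.
Qed.

Lemma mor_comp u v w (f : Defs.Hom pa u v) (g : Defs.Hom pa v w) :
  mor (hcomp f g) = scomp (mor f) (mor g).
Proof.
apply: functional_extensionality => i; apply: functional_extensionality => k.
by rewrite /mor /scomp (comp_eval cpt _ _ _ (eqP (svalP f))).
Qed.

Lemma mor_tens u1 w1 u2 w2 (f : Defs.Hom pa u1 w1) (g : Defs.Hom pa u2 w2) :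
  mor (htens f g) = stens (mor f) (mor g).
Proof.
apply: functional_extensionality => i; apply: functional_extensionality => j.
rewrite /mor /stens (tens_eval cpt _ _ _ (eqP (svalP f))).
rewrite (enc_psplit i) (enc_psplit j).
rewrite -(size_enc (@psplit _ tau u1 u2 i).1) -(size_enc (@psplit _ tau w1 w2 j).1).
by rewrite !takeS !dropS.
Qed.

Lemma mor_swap u w : mor (hswap pa u w) = @sswap R _ tau u w.
Proof.
apply: functional_extensionality => i; apply: functional_extensionality => j.
rewrite /mor /sswap /= (enc_psplit i) (enc_psplit j).
rewrite -(size_enc (@psplit _ tau u w i).1) takeS dropS.
rewrite eqseq_cat2; last by rewrite !size_enc.
by rewrite !enc_eq andbC (eq_sym (@psplit _ tau w u j).1) (eq_sym (@psplit _ tau w u j).2).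
Qed.

Lemma mor_copy x : mor (hcopy pa x) = @scopy R _ tau x.
Proof.
apply: functional_extensionality => -[a []]; apply: functional_extensionality => -[b [c []]].
by rewrite /mor /scopy /= !eqseq_cons !Tagged_inj eqxx andbT.
Qed.

Lemma mor_disc x : mor (hdisc pa x) = @sdisc R _ tau x.
Proof. by []. Qed.

Lemma mor_unif x : mor (hunif pa x) = @sunif R _ tau x.
Proof. by []. Qed.

End Build.



Section Main.
Variable R : realType.
Variable V : finType.
Variable pa : V -> seq V.

Definition build (b : BN R pa) (ne : forall x, (0 < #|bn_ty b x|)%N) : CDUFunctor R pa :=
  @Build_CDUFunctor R V pa (bn_ty b) ne (@mor R V pa (bn_ty b) (@bn_cpt _ _ _ b))
    (mor_stoch (@bn_ge0 _ _ _ b) (@bn_sum1 _ _ _ b) ne)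
    (@mor_resp _ _ _ _ _ ne)
    (@mor_id _ _ _ _ _)
    (@mor_comp _ _ _ _ _)
    (@mor_tens _ _ _ _ _)
    (@mor_swap _ _ _ _ _)
    (@mor_copy _ _ _ _ _)
    (@mor_disc _ _ _ _ _)
    (@mor_unif _ _ _ _ _).

Lemma BN_eq tau (c1 c2 : forall A, prodT tau (pa A) -> tau A -> R) p1 p2 q1 q2 :
  c1 = c2 -> @Build_BN R V pa tau c1 p1 q1 = @Build_BN R V pa tau c2 p2 q2.
Proof. move=> e; subst c2; f_equal; apply: proof_irrelevance. Qed.

Lemma restrict_build b ne : restrict (@build b ne) = b.
Proof.
case: b ne => tau cpt ge sum ne /=.
have e : (fun A (i : prodT tau (pa A)) (j : tau A) => @mor R V pa tau cpt _ _ (hgen pa A) i (j, tt)) = cpt.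
  apply: functional_extensionality_dep => A; apply: functional_extensionality => i.
  apply: functional_extensionality => j; exact: gen_eval.
exact: BN_eq.
Qed.


Lemma hom_ext u w t (p q : ty pa t == Some (u, w)) :
  (exist _ t p : Defs.Hom pa u w) = exist _ t q.
Proof. by rewrite (eq_irrelevance p q). Qed.

Lemma mor_unique (ob : V -> finType)
  (m1 m2 : forall u w, Defs.Hom pa u w -> prodT ob u -> prodT ob w -> R)
  (gen : forall A, m1 _ _ (hgen pa A) = m2 _ _ (hgen pa A))
  (id1 : forall w, m1 _ _ (hid pa w) = @sid R _)
  (id2 : forall w, m2 _ _ (hid pa w) = @sid R _)
  (comp1 : forall u v w (f : Defs.Hom pa u v) (g : Defs.Hom pa v w),
      m1 _ _ (hcomp f g) = scomp (m1 _ _ f) (m1 _ _ g))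
  (comp2 : forall u v w (f : Defs.Hom pa u v) (g : Defs.Hom pa v w),
      m2 _ _ (hcomp f g) = scomp (m2 _ _ f) (m2 _ _ g))
  (tens1 : forall u1 w1 u2 w2 (f : Defs.Hom pa u1 w1) (g : Defs.Hom pa u2 w2),
      m1 _ _ (htens f g) = stens (m1 _ _ f) (m1 _ _ g))
  (tens2 : forall u1 w1 u2 w2 (f : Defs.Hom pa u1 w1) (g : Defs.Hom pa u2 w2),
      m2 _ _ (htens f g) = stens (m2 _ _ f) (m2 _ _ g))
  (swap1 : forall u w, m1 _ _ (hswap pa u w) = @sswap R _ ob u w)
  (swap2 : forall u w, m2 _ _ (hswap pa u w) = @sswap R _ ob u w)
  (copy1 : forall x, m1 _ _ (hcopy pa x) = @scopy R _ ob x)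
  (copy2 : forall x, m2 _ _ (hcopy pa x) = @scopy R _ ob x)
  (disc1 : forall x, m1 _ _ (hdisc pa x) = @sdisc R _ ob x)
  (disc2 : forall x, m2 _ _ (hdisc pa x) = @sdisc R _ ob x)
  (unif1 : forall x, m1 _ _ (hunif pa x) = @sunif R _ ob x)
  (unif2 : forall x, m2 _ _ (hunif pa x) = @sunif R _ ob x) :
  forall u w f, m1 u w f = m2 u w f.
Proof.
move=> u w [t p]; elim: t u w p => [A|w0|f IHf g IHg|f IHf g IHg|a b|x|x|x] u w p.
- have /eqP [e1 e2] := p; subst u w.
  rewrite (hom_ext p (eqxx _)); exact: gen.
- have /eqP [e1 e2] := p; subst u w.
  by rewrite (hom_ext p (eqxx _)); have := id1 w0; have := id2 w0; rewrite /hid => -> ->.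
- have [v [hf hg]] := ty_CompP (eqP p).
  have pf : ty pa f == Some (u, v) by rewrite hf.
  have pg : ty pa g == Some (v, w) by rewrite hg.
  have -> : (exist _ (Comp f g) p : Defs.Hom pa u w) =
     hcomp (exist _ f pf : Defs.Hom pa u v) (exist _ g pg : Defs.Hom pa v w).
    exact: hom_ext.
  by rewrite comp1 comp2 IHf IHg.
- have [u1 [w1 [u2 [w2 [hf hg e1 e2]]]]] := ty_TensP (eqP p); subst u w.
  have pf : ty pa f == Some (u1, w1) by rewrite hf.
  have pg : ty pa g == Some (u2, w2) by rewrite hg.
  have -> : (exist _ (Tens f g) p : Defs.Hom pa _ _) =
     htens (exist _ f pf : Defs.Hom pa u1 w1) (exist _ g pg : Defs.Hom pa u2 w2).
    exact: hom_ext.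
  by rewrite tens1 tens2 IHf IHg.
- have /eqP [e1 e2] := p; subst u w.
  by rewrite (hom_ext p (eqxx _)); have := swap1 a b; have := swap2 a b; rewrite /hswap => -> ->.
- have /eqP [e1 e2] := p; subst u w.
  by rewrite (hom_ext p (eqxx _)); have := copy1 x; have := copy2 x; rewrite /hcopy => -> ->.
- have /eqP [e1 e2] := p; subst u w.
  by rewrite (hom_ext p (eqxx _)); have := disc1 x; have := disc2 x; rewrite /hdisc => -> ->.
- have /eqP [e1 e2] := p; subst u w.
  by rewrite (hom_ext p (eqxx _)); have := unif1 x; have := unif2 x; rewrite /hunif => -> ->.
Qed.

Lemma restrict_inj : injective (@restrict R V pa).
Proof.
move=> [ob1 ne1 m1 st1 rs1 id1 c1 t1 sw1 cp1 d1 u1] [ob2 ne2 m2 st2 rs2 id2 c2 t2 sw2 cp2 d2 u2] H.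
have e := congr1 (@bn_ty _ _ _) H; simpl in e; subst ob2.
injection H => Hc.
have {}Hc := Eqdep.EqdepTheory.inj_pair2 _ _ _ _ _ Hc.
have em : m1 = m2.
  apply: functional_extensionality_dep => u; apply: functional_extensionality_dep => w.
  apply: functional_extensionality => f.
  apply: (mor_unique (m1 := m1) (m2 := m2)) => //.
  move=> A; apply: functional_extensionality => i; apply: functional_extensionality => -[j []].
  exact: (congr1 (fun c => c A i j) Hc).
subst m2; f_equal; apply: proof_irrelevance.
Qed.

Lemma bn_ne (E : rel V) (acyclic : forall x y : V, E x y -> ~~ connect E y x)
    (parents : forall A : V, perm_eq (pa A) [seq B <- enum V | E B A])
    (b : BN R pa) x : (0 < #|bn_ty b x|)%N.
Proof.
have step : forall x, (forall y, E y x -> 0 < #|bn_ty b y|)%N -> (0 < #|bn_ty b x|)%N.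
  move=> {}x hx.
  have hp : forall m, (forall y, y \in m -> 0 < #|bn_ty b y|)%N ->
      exists i : prodT (bn_ty b) m, True.
    elim=> [|y m IH] hm; first by exists tt.
    have [a _] : exists a : bn_ty b y, True.
      by case/card_gt0P: (hm y (mem_head _ _)) => a _; exists a.
    have [i _] : exists i : prodT (bn_ty b) m, True.
      by apply: IH => z hz; apply: hm; rewrite in_cons hz orbT.
    by exists (a, i).
  have [i _] := hp (pa x) (fun y hy => hx y (
      let h := (perm_mem (parents x) y) in
      proj1 (andP (eq_ind _ (fun bb => is_true bb) hy _ (etrans h (mem_filter _ _ _)))))).
  apply/card_gt0P; case: (pickP [pred j : bn_ty b x | true]) => [j _|h]; first by exists j.
  have := bn_sum1 i; rewrite big_pred0; last by move=> j; exact: h j.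
  by move/eqP; rewrite eq_sym oner_eq0.
suff: forall n x, (#|[set y | connect E y x]| <= n)%N -> (0 < #|bn_ty b x|)%N.
  by move=> /(_ _ x (leqnn _)).
elim=> [|n IH] {}x hn.
  have : x \in [set y | connect E y x] by rewrite inE connect0.
  by move: hn; rewrite leqn0 cards_eq0 => /eqP ->; rewrite inE.
apply: step => y hy; apply: IH.
have sub : [set z | connect E z y] \proper [set z | connect E z x].
  apply/properP; split.
    apply/subsetP => z; rewrite !inE => hz; exact: connect_trans hz (connect1 hy).
  by exists x; rewrite !inE ?connect0 //; exact: acyclic hy.
by rewrite -ltnS (leq_trans (proper_card sub) hn).
Qed.

End Main.

Local Close Scope ring_scope.
Unset Implicit Arguments.

Theorem proposition2 (R : realType) (V : finType) (E : rel V)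
    (pa : V -> seq V)
    (acyclic : forall x y : V, E x y -> ~~ connect E y x)
    (parents : forall A : V, perm_eq (pa A) [seq B <- enum V | E B A]) :
  bijective (@restrict R V pa).
Proof.
pose ne := fun b => @bn_ne R V pa E acyclic parents b.
exists (fun b => build (ne b)).
- move=> F; apply: restrict_inj; exact: restrict_build.
- move=> b; exact: restrict_build.
Qed.
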